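(* Let $n\ge 3$ and let $L^B$ be a blow-up of $L\cong\mathbf{2}^n$ in which the atoms $q_1,\dots,q_n$ of $L$ are not replaced by longer chains (i.e. $|C_{q_i}|=1$ for all $i$). Then a vertex $x$ of $G(L^B)^{**}$ is isolated if and only if $x$ is an atom of $L^B$.
   Context: Blow-up: for $L\cong\mathbf{2}^n$ with atoms $q_1,\dots,q_n$, replace each $a\in L\setminus\{0,1\}$ by a finite chain $C_a$: $a=a^1\lessdot\cdots\lessdot a^{k_a}$ ($k_a\ge1$), keep $0,1$; elements of one chain are ordered along it, and for $u\in C_a,v\in C_b$ with $a\ne b$ ($C_0=\{0\},C_1=\{1\}$), $u\le v$ iff $a<b$ in $L$. $G(L^B)$ is the zero-divisor graph of $L^B$ (vertices: nonzero elements with a nonzero element meeting them in $0$; adjacency: meet $=0$). For $x\in L^B$, $x^\perp=\{z:x\wedge z=0\}$, $[x]=\{y: y^\perp=x^\perp\}$, and the classes are ordered by $[a]\le[b]$ iff $b^\perp\subseteq a^\perp$, with $[a]\wedge[b]=[a\wedge b]$. The graph $G(L^B)^{**}$ has the same vertex set as $G(L^B)$, and distinct vertices $x,y$ are adjacent iff either $[x]=[y]$, or $[x]\wedge[y]\neq[0]$ and $[x],[y]$ are incomparable (equivalently, $a\wedge b\ne0$, $a\not\le b$, $b\not\le a$ for all $a\in[x]$, $b\in[y]$). *)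

(* Defs.v *)
From mathcomp Require Import all_boot.
Set Implicit Arguments. Unset Strict Implicit. Unset Printing Implicit Defensive.

(* L = 2^n is modelled as {set 'I_n}; atoms are the singletons [set i].     *)
Definition inner (n : nat) (a : {set 'I_n}) : bool := (a != set0) && (a != setT).

(* Blow-up data: k a = |C_a| for inner a; C_0 = {0}, C_1 = {1}.            *)
Definition chainlen (n : nat) (k : {set 'I_n} -> nat) (a : {set 'I_n}) : nat :=
  if inner a then k a else 1.

(* Elements of L^B: pairs (a, i) meaning a^{i+1} in C_a, with i < |C_a|.   *)
Definition blowup_elem (n : nat) (k : {set 'I_n} -> nat)
  (p : {set 'I_n} * nat) : bool := p.2 < chainlen k p.1.

Definition BU (n : nat) (k : {set 'I_n} -> nat) :=
  {p : {set 'I_n} * nat | blowup_elem k p}.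

Definition BUle (n : nat) (k : {set 'I_n} -> nat) (x y : BU k) : Prop :=
  let a := (proj1_sig x).1 in let i := (proj1_sig x).2 in
  let b := (proj1_sig y).1 in let j := (proj1_sig y).2 in
  ((a == b) && (i <= j)) \/ (a \proper b).

Lemma blowup_bot (n : nat) (k : {set 'I_n} -> nat) : blowup_elem k (set0, 0).
Proof. by rewrite /blowup_elem /chainlen /inner eqxx. Qed.

Definition BUbot (n : nat) (k : {set 'I_n} -> nat) : BU k :=
  exist _ (set0, 0) (blowup_bot k).

Definition is_glb (n : nat) (k : {set 'I_n} -> nat) (x y m : BU k) : Prop :=
  BUle m x /\ BUle m y /\ (forall z, BUle z x -> BUle z y -> BUle z m).

Definition meet0 (n : nat) (k : {set 'I_n} -> nat) (x y : BU k) : Prop :=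
  is_glb x y (BUbot k).

Definition ZDvertex (n : nat) (k : {set 'I_n} -> nat) (x : BU k) : Prop :=
  x <> BUbot k /\ exists z, z <> BUbot k /\ meet0 x z.

(* [x] = [y] iff x^perp = y^perp ;  [x] <= [y] iff y^perp \subseteq x^perp. *)
Definition cls_eq (n : nat) (k : {set 'I_n} -> nat) (x y : BU k) : Prop :=
  forall z, meet0 x z <-> meet0 y z.
Definition cls_le (n : nat) (k : {set 'I_n} -> nat) (x y : BU k) : Prop :=
  forall z, meet0 y z -> meet0 x z.

(* Adjacency in G(L^B)^**: [x]=[y], or [x]/\[y] = [x/\y] <> [0] and [x],[y]
   incomparable. *)
Definition adj2star (n : nat) (k : {set 'I_n} -> nat) (x y : BU k) : Prop :=
  x <> y /\
  (cls_eq x y \/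
   ((exists m, is_glb x y m /\ ~ cls_eq m (BUbot k)) /\
    ~ cls_le x y /\ ~ cls_le y x)).

Definition isolated2star (n : nat) (k : {set 'I_n} -> nat) (x : BU k) : Prop :=
  forall y, ZDvertex y -> ~ adj2star x y.

Definition BUatom (n : nat) (k : {set 'I_n} -> nat) (x : BU k) : Prop :=
  x <> BUbot k /\ forall z, BUle z x -> z = BUbot k \/ z = x.

(* Main.v *)
Require Import Defs.
From mathcomp Require Import all_boot.
Set Implicit Arguments. Unset Strict Implicit. Unset Printing Implicit Defensive.

Lemma mk_ok (n : nat) (k : {set 'I_n} -> nat)
  (hk : forall a : {set 'I_n}, inner a -> 0 < k a) (c : {set 'I_n}) :
  blowup_elem k (c, 0).
Proof. rewrite /blowup_elem /chainlen /=; case: ifP => // /hk //. Qed.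

Definition mk (n : nat) (k : {set 'I_n} -> nat)
  (hk : forall a : {set 'I_n}, inner a -> 0 < k a) (c : {set 'I_n}) : BU k :=
  exist _ (c, 0) (mk_ok hk c).

Lemma BU_eq (n : nat) (k : {set 'I_n} -> nat) (x y : BU k) :
  proj1_sig x = proj1_sig y -> x = y.
Proof.
case: x => [p hp]; case: y => [q hq] /= E; subst q.
by rewrite (eq_irrelevance hp hq).
Qed.

Lemma val_bot (n : nat) (k : {set 'I_n} -> nat) (w : BU k) :
  (proj1_sig w).1 = set0 -> w = BUbot k.
Proof.
case: w => [[c j] hj] /= E; subst c; apply: BU_eq => /=.
move: hj; rewrite /blowup_elem /chainlen /inner eqxx /=.
by case: j.
Qed.

Lemma le_sub (n : nat) (k : {set 'I_n} -> nat) (x y : BU k) :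
  BUle x y -> (proj1_sig x).1 \subset (proj1_sig y).1.
Proof.
rewrite /BUle => -[/andP [/eqP -> _] | /properP [] //].
exact: subxx.
Qed.

Lemma sub_le (n : nat) (k : {set 'I_n} -> nat)
  (hk : forall a : {set 'I_n}, inner a -> 0 < k a) (c : {set 'I_n}) (x : BU k) :
  c \subset (proj1_sig x).1 -> BUle (mk hk c) x.
Proof.
move=> H; rewrite /BUle /=.
case E: (c == (proj1_sig x).1); first by left.
by right; rewrite properEneq E H.
Qed.

Lemma bot_le (n : nat) (k : {set 'I_n} -> nat) (x : BU k) : BUle (BUbot k) x.
Proof.
rewrite /BUle /=.
case E: (set0 == (proj1_sig x).1); first by left.
by right; rewrite properEneq E sub0set.
Qed.

Lemma meet0P (n : nat) (k : {set 'I_n} -> nat)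
  (hk : forall a : {set 'I_n}, inner a -> 0 < k a) (x z : BU k) :
  meet0 x z <-> (proj1_sig x).1 :&: (proj1_sig z).1 = set0.
Proof.
split.
- move=> [_ [_ H]]; apply/eqP; apply/negPn/negP => /set0Pn [t].
  rewrite inE => /andP [tx tz].
  have := H (mk hk [set t]) (@sub_le _ _ hk _ x _) (@sub_le _ _ hk _ z _).
  rewrite !sub1set => /(_ tx tz) /le_sub /= /subsetP /(_ t).
  by rewrite !inE eqxx => /(_ isT).
- move=> D; split; first exact: bot_le.
  split; first exact: bot_le.
  move=> w /le_sub wx /le_sub wz.
  have -> : w = BUbot k; last exact: bot_le.
  apply: val_bot; apply/eqP; rewrite -subset0 -D subsetI wx wz //.
Qed.

Lemma chainlen_atom (n : nat) (k : {set 'I_n} -> nat)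
  (hatoms : forall i : 'I_n, k [set i] = 1) (t : 'I_n) :
  chainlen k [set t] = 1.
Proof. by rewrite /chainlen; case: ifP. Qed.

Lemma atom_eq (n : nat) (k : {set 'I_n} -> nat)
  (hatoms : forall i : 'I_n, k [set i] = 1) (t : 'I_n) (x y : BU k) :
  (proj1_sig x).1 = [set t] -> (proj1_sig y).1 = [set t] -> x = y.
Proof.
case: x => [[a i] hi]; case: y => [[b j] hj] /= Ea Eb; subst a b.
apply: BU_eq => /=.
move: hi hj; rewrite /blowup_elem /= chainlen_atom //.
by case: i => // _; case: j.
Qed.

Theorem mainTheorem6 (n : nat) (k : {set 'I_n} -> nat)
  (hn : 3 <= n)
  (hk : forall a : {set 'I_n}, inner a -> 0 < k a)
  (hatoms : forall i : 'I_n, k [set i] = 1)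
  (x : BU k) :
  ZDvertex x -> (isolated2star x <-> BUatom x).
Proof.
move=> [xb [z [zb /(meet0P hk) xz]]].
set a := (proj1_sig x).1 in xz *.
have a0 : a != set0.
  by apply/negP => /eqP /val_bot.
have aT : a != setT.
  apply/negP => /eqP aT; apply: zb; apply: val_bot.
  by move: xz; rewrite aT setTI.
have [s sa] : exists s, s \notin a.
  case: (pickP (fun s => s \notin a)) => [s Hs | H]; first by exists s.
  exfalso; move/negP: aT; apply; apply/eqP/setP => s; rewrite inE.
  by have := H s => /negbFE.
split.
- move=> iso.
  have card1 : #|a| = 1.
    apply/eqP; rewrite eqn_leq card_gt0 a0 andbT leqNgt; apply/negP.
    move/card_gt1P => [t [u [ta ua tu]]].
    set b := [set t; s].
    have tb : t \in b by rewrite !inE eqxx.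
    have sb : s \in b by rewrite !inE eqxx orbT.
    have ub : u \notin b.
      rewrite !inE negb_or eq_sym tu /=; apply/eqP => E; subst u.
      by rewrite ua in sa.
    have bT : b != setT.
      apply/negP => /eqP E.
      have := cards2 t s; rewrite -/b E cardsT card_ord => E2.
      by move: hn; rewrite E2; case: (t != s).
    have Cb0 : ~: b != set0.
      apply/negP => /eqP E; move/negP: bT; apply; apply/eqP.
      by rewrite -(setCK b) E setC0.
    apply: (iso (mk hk b)).
    + split.
      * by move/(f_equal (fun w => (proj1_sig w).1)) => /= E; rewrite E inE in tb.
      * exists (mk hk (~: b)); split.
          by move/(f_equal (fun w => (proj1_sig w).1)) => /= E; rewrite E eqxx in Cb0.
        by apply/(meet0P hk) => /=; rewrite setICr.
    + split.
        move/(f_equal (fun w => (proj1_sig w).1)) => /= E.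
        by move: sa; rewrite /a E sb.
      right; split; [exists (mk hk [set t]); split; [split; [|split]|] | split].
      * by apply: sub_le; rewrite sub1set.
      * by apply: sub_le; rewrite sub1set.
      * move=> w /le_sub wx /le_sub /= wb.
        have : (proj1_sig w).1 \subset [set t].
          apply/subsetP => v vw; rewrite inE.
          have := subsetP wb v vw; rewrite !inE => /orP [] // /eqP E; subst v.
          by have := subsetP wx s vw; rewrite -/a (negbTE sa).
        rewrite subset1 => /orP [/eqP E | /eqP E].
          move: (proj2_sig w); rewrite /blowup_elem E chainlen_atom //.
          by rewrite ltnS leqn0 => /eqP j0; left; rewrite /= E j0 eqxx.
        by rewrite (val_bot E); apply: bot_le.
      * move=> H.
        have h1 : meet0 (BUbot k) (mk hk [set t]) by apply/(meet0P hk); rewrite /= set0I.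
        have /(meet0P hk) := proj2 (H _) h1; rewrite /= setIid => /eqP.
        by apply/negP; rewrite -card_gt0 cards1.
      * move=> H.
        have h1 : meet0 (mk hk b) (mk hk (~: b)) by apply/(meet0P hk); rewrite /= setICr.
        have /(meet0P hk) /= /eqP := H _ h1.
        move/eqP/setP/(_ u); rewrite !inE ua /=. move: ub; rewrite !inE. by case: (_ || _).
      * move=> H.
        have h1 : meet0 x (mk hk (~: a)) by apply/(meet0P hk); rewrite /= setICr.
        have /(meet0P hk) /= /eqP := H _ h1.
        move/eqP/setP/(_ s); rewrite !inE eqxx orbT /=. by rewrite -/a (negbTE sa).
  have [t At] : exists t, a = [set t] by apply/cards1P; rewrite card1.
  split => // w /le_sub; rewrite -/a At subset1 => /orP [/eqP E | /eqP E].
    by right; apply: (atom_eq hatoms E At).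
  by left; apply: val_bot.
- move=> [_ atm] y [yb _] [xy adj].
  have [t ta] := set0Pn _ a0.
  have At : a = [set t].
    case: (atm (mk hk [set t])) => [|E|E].
    + by apply: sub_le; rewrite sub1set.
    + by move/(f_equal (fun w => (proj1_sig w).1)): E => /= /setP/(_ t); rewrite !inE eqxx.
    + by rewrite /a -E.
  case: adj => [H | [[m [[mx [my _]] mb]] [nle _]]].
  + have h1 : meet0 x (mk hk (~: a)) by apply/(meet0P hk); rewrite /= setICr.
    have /(meet0P hk) /= /eqP := proj1 (H _) h1.
    rewrite -subset0 => sub.
    have yt : (proj1_sig y).1 = [set t].
      have : (proj1_sig y).1 \subset [set t].
        apply/subsetP => v vy; case: (boolP (v \in a)) => [|va]; first by rewrite At.
        by have := subsetP sub v; rewrite !inE vy -/a va => /(_ isT).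
      rewrite subset1 => /orP [/eqP //| /eqP E].
      by exfalso; apply: yb; apply: val_bot.
    by apply: xy; apply: (atom_eq hatoms At yt).
  + have mt : (proj1_sig m).1 = [set t].
      have := le_sub mx; rewrite -/a At subset1 => /orP [/eqP //| /eqP E].
      by exfalso; apply: mb; rewrite (val_bot E).
    apply: nle => w /(meet0P hk) D; apply/(meet0P hk).
    apply/eqP; rewrite -subset0 -D setSI //.
    by rewrite -/a At -mt; apply: le_sub.
Qed.
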